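(* Let $N$ be an $n$-dimensional hypersurface isometrically immersed in Euclidean space $\mathbb R^{n+1}$. Then $N$ is $\Phi$-SSU with respect to this immersion if and only if at every point, for a suitable choice of unit normal, its principal curvatures satisfy $0<\lambda_1\le\lambda_2\le\cdots\le\lambda_n<\frac13(\lambda_1+\cdots+\lambda_{n-1})$.
   Context: For an isometric immersion of a Riemannian $n$-manifold $N$ into $\mathbb R^q$ with second fundamental form $\mathsf B$, $N$ is $\Phi$-SSU with respect to this immersion if for every $y\in N$ and every unit tangent vector $\mathsf x\in T_yN$, $\sum_{\beta=1}^n\big(4|\mathsf B(\mathsf x,\mathsf e_\beta)|^2-\langle \mathsf B(\mathsf x,\mathsf x),\mathsf B(\mathsf e_\beta,\mathsf e_\beta)\rangle\big)<0$, where $\{\mathsf e_\beta\}$ is an orthonormal basis of $T_yN$. *)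

(* Defs.v *)
From mathcomp Require Import all_boot all_order all_algebra.
From mathcomp Require Import reals.
Set Implicit Arguments. Unset Strict Implicit. Unset Printing Implicit Defensive.
Import Order.TTheory GRing.Theory Num.Theory.
Local Open Scope ring_scope.

Definition dotv (R : realType) (q : nat) (u v : 'rV[R]_q) : R := (u *m v^T) 0 0.

Definition ebasis (R : realType) (n : nat) (b : 'I_n) : 'rV[R]_n := delta_mx 0 b.

(* Phi-SSU condition at a point y, for the second fundamental form
   B : T_yN x T_yN -> R^q, with T_yN identified with R^n via an orthonormal
   frame (so the standard basis is an orthonormal basis of T_yN). *)
Definition PhiSSU_at (R : realType) (n q : nat)
  (B : 'rV[R]_n -> 'rV[R]_n -> 'rV[R]_q) : Prop :=
  forall x : 'rV[R]_n, dotv x x = 1 ->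
    \sum_(b < n) (4 * dotv (B x (@ebasis R n b)) (B x (@ebasis R n b))
                  - dotv (B x x) (B (@ebasis R n b) (@ebasis R n b))) < 0.

(* Second fundamental form of a hypersurface at a point: B(x,z) = h(x,z) nu,
   where h is the scalar second fundamental form (symmetric matrix in an
   orthonormal tangent frame) w.r.t. the unit normal nu in R^(n+1). *)
Definition hyp_sff (R : realType) (n : nat) (h : 'M[R]_n) (nu : 'rV[R]_n.+1)
  (x z : 'rV[R]_n) : 'rV[R]_n.+1 := (x *m h *m z^T) 0 0 *: nu.

(* The principal curvatures (eigenvalues of the shape operator h, with
   multiplicity, i.e. roots of its characteristic polynomial), listed in
   nondecreasing order lam_1 <= ... <= lam_m, satisfy
   0 < lam_1 and lam_m < (lam_1 + ... + lam_(m-1))/3. *)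
Definition pc_condition (R : realType) (n : nat) (h : 'M[R]_n.+1) : Prop :=
  exists lam : 'I_n.+1 -> R,
    char_poly h = \prod_(i < n.+1) ('X - (lam i)%:P) /\
    (forall i j : 'I_n.+1, (i <= j)%N -> lam i <= lam j) /\
    0 < lam ord0 /\
    lam ord_max < (\sum_(i < n.+1 | i != ord_max) lam i) / 3.

(* Main.v *)
Require Import Defs.
From mathcomp Require Import all_boot all_order all_algebra.
From mathcomp Require Import reals.
From mathcomp Require Import complex sesquilinear spectral ring lra.
Set Implicit Arguments. Unset Strict Implicit. Unset Printing Implicit Defensive.
Import Order.TTheory GRing.Theory Num.Theory.
Local Open Scope ring_scope.
Local Open Scope sesquilinear_scope.
Lemma char_poly_sim (F : fieldType) m (Q P D : 'M[F]_m) :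
  Q *m P = 1%:M -> char_poly (Q *m D *m P) = char_poly D.
Proof.
move=> QP; rewrite /char_poly /char_poly_mx.
have EX : ('X%:M : 'M[{poly F}]_m) = map_mx polyC Q *m 'X%:M *m map_mx polyC P.
  by rewrite -mulmxA -scalar_mxC mulmxA -map_mxM QP map_mx1 mul1mx.
rewrite {1}EX !map_mxM -mulmxBl -mulmxBr !det_mulmx mulrAC -det_mulmx -map_mxM QP.
by rewrite map_mx1 det1 mul1r.
Qed.

Section Diag.
Variable R : rcfType.
Local Notation C := (R[i]).
Local Notation toC := (real_complex R).

Lemma herm_of_sym m (A : 'M[R]_m) : A^T = A -> map_mx toC A \is hermsymmx.
Proof.
move=> sA; apply/is_hermitianmxP; rewrite expr0 scale1r.
apply/matrixP => i j; rewrite !mxE /=.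
rewrite -{1}sA mxE.
exact/esym/conjc_real.
Qed.

Lemma Creal_eq (x : C) : x \is Num.real -> x = (complex.Re x)%:C%C.
Proof.
case: x => a b; rewrite realE !lecE /= => /orP[] /andP[/eqP H _]; by rewrite -?H // H.
Qed.

Lemma sym_decomp m (A : 'M[R]_m) : A^T = A -> exists (P : 'M[C]_m) (d : 'I_m -> R),
  [/\ P *m P^t* = 1%:M, P^t* *m P = 1%:M &
      map_mx toC A = P^t* *m diag_mx (\row_i (d i)%:C%C) *m P].
Proof.
move=> sA; have H := herm_of_sym sA.
have U := spectral_unitarymx (map_mx toC A).
have Ud := unitarymx_unit U.
have /orthomx_spectralP E := hermitian_normalmx H.
have Hr := hermitian_spectral_diag_real H.
exists (spectralmx (map_mx toC A)), (fun i => complex.Re (spectral_diag (map_mx toC A) 0 i)).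
split.
- exact/unitarymxP.
- by rewrite -invmx_unitary // mulVmx.
rewrite -invmx_unitary // {1}E; congr (_ *m diag_mx _ *m _).
apply/rowP => i; rewrite mxE -Creal_eq //.
by apply: (mxOverP Hr).
Qed.

Lemma charpoly_decomp m (A : 'M[R]_m) (P : 'M[C]_m) (d : 'I_m -> R) :
  P^t* *m P = 1%:M ->
  map_mx toC A = P^t* *m diag_mx (\row_i (d i)%:C%C) *m P ->
  char_poly A = \prod_(i < m) ('X - (d i)%:P).
Proof.
move=> PP E; apply: (@map_poly_inj _ _ toC).
rewrite map_char_poly E char_poly_sim // char_poly_trig ?diag_mx_is_trig //.
rewrite rmorph_prod; apply: eq_bigr => i _.
by rewrite rmorphB /= map_polyX map_polyC /= !mxE eqxx mulr1n.
Qed.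

Definition wr m (P : 'M[C]_m) (x : 'rV[R]_m) (i : 'I_m) : R :=
  let yi := (map_mx toC x *m P^t*) 0 i in complex.Re yi ^+ 2 + complex.Im yi ^+ 2.

Lemma wr_ge0 m P x i : 0 <= @wr m P x i.
Proof. by rewrite /wr addr_ge0 ?sqr_ge0. Qed.

Lemma cnorm_id (z : C) (r : R) :
  z * (r%:C)%C * (z^*)%C = ((r * (complex.Re z ^+ 2 + complex.Im z ^+ 2))%:C)%C.
Proof.
case: z => a b /=; simpc; rewrite /real_complex_def; congr Complex; ring.
Qed.

Lemma quad_id m (M : 'M[R]_m) (P : 'M[C]_m) (e : 'I_m -> R) (x : 'rV[R]_m) :
  map_mx toC M = P^t* *m diag_mx (\row_i (e i)%:C%C) *m P ->
  (x *m M *m x^T) 0 0 = \sum_i e i * wr P x i.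
Proof.
move=> E; apply: (@complexI R _ _ _).
have -> : toC ((x *m M *m x^T) 0 0) = (map_mx toC x *m map_mx toC M *m (map_mx toC x)^T) 0 0.
  by rewrite map_trmx -!map_mxM [RHS]mxE.
have -> : (map_mx toC x)^T = (map_mx toC x)^t*.
  by apply/matrixP => i j; rewrite !mxE; exact/esym/conjc_real.
rewrite E !mulmxA -[_ *m P *m _]mulmxA.
have -> : P *m (map_mx toC x)^t* = (map_mx toC x *m P^t*)^t*.
  by rewrite trmx_mul map_mxM trmxCK.
rewrite /wr; set y := map_mx toC x *m P^t*; clearbody y.
rewrite mul_mx_diag mxE rmorph_sum; apply: eq_bigr => i _.
rewrite !mxE; exact: cnorm_id.
Qed.

Lemma trace_decomp m (A : 'M[R]_m) (P : 'M[C]_m) (d : 'I_m -> R) :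
  P *m P^t* = 1%:M ->
  map_mx toC A = P^t* *m diag_mx (\row_i (d i)%:C%C) *m P ->
  \tr A = \sum_i d i.
Proof.
move=> PP E; apply: (@complexI R _ _ _).
have -> : toC (\tr A) = \tr (map_mx toC A).
  by rewrite /mxtrace rmorph_sum; apply: eq_bigr => i _; rewrite mxE.
rewrite E mxtrace_mulC mulmxA PP mul1mx /mxtrace rmorph_sum.
by apply: eq_bigr => i _; rewrite !mxE eqxx mulr1n.
Qed.

Lemma decomp_sq m (A : 'M[R]_m) (P : 'M[C]_m) (d : 'I_m -> R) :
  P *m P^t* = 1%:M ->
  map_mx toC A = P^t* *m diag_mx (\row_i (d i)%:C%C) *m P ->
  map_mx toC (A *m A) = P^t* *m diag_mx (\row_i ((d i * d i)%:C)%C) *m P.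
Proof.
move=> PP E; rewrite map_mxM E.
rewrite -!mulmxA; congr (_ *m _); rewrite !mulmxA.
rewrite -[_ *m P *m P^t*]mulmxA PP mulmx1 mulmx_diag; congr (diag_mx _ *m _).
by apply/rowP => i; rewrite !mxE rmorphM.
Qed.

Lemma decomp_one m (P : 'M[C]_m) :
  P^t* *m P = 1%:M ->
  map_mx toC (1%:M : 'M[R]_m) = P^t* *m diag_mx (\row_i ((1 : R)%:C)%C) *m P.
Proof.
move=> PP; rewrite map_mx1.
rewrite (_ : \row_i _ = const_mx 1); last by apply/rowP => i; rewrite !mxE rmorph1.
by rewrite diag_const_mx mulmx1 PP.
Qed.

Lemma ReD : {morph (@complex.Re R) : x y / x + y}.
Proof. by case=> a b [c d]. Qed.
Lemma ImD : {morph (@complex.Im R) : x y / x + y}.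
Proof. by case=> a b [c d]. Qed.
Lemma Re_sum m (f : 'I_m -> C) : complex.Re (\sum_k f k) = \sum_k complex.Re (f k).
Proof. exact: (big_morph _ ReD). Qed.
Lemma Im_sum m (f : 'I_m -> C) : complex.Im (\sum_k f k) = \sum_k complex.Im (f k).
Proof. exact: (big_morph _ ImD). Qed.
Lemma ReMr (z : C) (r : R) : complex.Re (z * (r%:C)%C) = complex.Re z * r.
Proof. by case: z => a b /=; simpc. Qed.
Lemma ImMr (z : C) (r : R) : complex.Im (z * (r%:C)%C) = complex.Im z * r.
Proof. by case: z => a b /=; simpc. Qed.
Lemma ReMl (z : C) (r : R) : complex.Re ((r%:C)%C * z) = r * complex.Re z.
Proof. by case: z => a b /=; simpc. Qed.
Lemma ImMl (z : C) (r : R) : complex.Im ((r%:C)%C * z) = r * complex.Im z.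
Proof. by case: z => a b /=; simpc. Qed.

Lemma normalize m (A : 'M[R]_m) (z : 'rV[R]_m) (c : R) :
  z != 0 -> z *m A = c *: z ->
  exists x : 'rV[R]_m, (x *m x^T) 0 0 = 1 /\ x *m A = c *: x.
Proof.
move=> z0 zA.
have zz : (z *m z^T) 0 0 = \sum_j z 0 j ^+ 2.
  by rewrite mxE; apply: eq_bigr => j _; rewrite !mxE expr2.
have zpos : 0 < (z *m z^T) 0 0.
  rewrite zz lt_def sumr_ge0 ?andbT; last by move=> j _; rewrite sqr_ge0.
  apply: contra z0 => /eqP H; apply/eqP/rowP => j; rewrite mxE.
  have := psumr_eq0P (fun j _ => sqr_ge0 (z 0 j)) H (i:=j) isT.
  by move/eqP; rewrite sqrf_eq0 => /eqP.
set t := (z *m z^T) 0 0 in zpos zz *.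
exists ((Num.sqrt t)^-1 *: z); split; last first.
  by rewrite -scalemxAl zA scalerA mulrC -scalerA.
rewrite -scalemxAl linearZ /= -scalemxAr !mxE -/t mulrA -expr2 exprVn.
rewrite sqr_sqrtr ?ltW //.
have -> : \sum_j z 0 j * z^T j 0 = t by rewrite /t mxE.
by rewrite mulVf // gt_eqF.
Qed.

Lemma real_eigvec m (A : 'M[R]_m) (P : 'M[C]_m) (d : 'I_m -> R) :
  P *m P^t* = 1%:M ->
  map_mx toC A = P^t* *m diag_mx (\row_i (d i)%:C%C) *m P ->
  forall i, exists x : 'rV[R]_m, (x *m x^T) 0 0 = 1 /\ x *m A = d i *: x.
Proof.
move=> PP E i.
have PA : P *m map_mx toC A = diag_mx (\row_i (d i)%:C%C) *m P.
  by rewrite E !mulmxA PP mul1mx.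
have vA : forall j, \sum_k P i k * (A k j)%:C%C = (d i)%:C%C * P i j.
  move=> j; have := congr1 (fun M : 'M[C]_m => M i j) PA; rewrite mul_diag_mx !mxE => <-.
  by apply: eq_bigr => k _; rewrite !mxE.
have v1 : \sum_k P i k * (P i k)^* = 1.
  have := congr1 (fun M : 'M[C]_m => M i i) PP; rewrite !mxE eqxx mulr1n => <-.
  by apply: eq_bigr => k _; rewrite !mxE.
pose a := \row_j complex.Re (P i j); pose b := \row_j complex.Im (P i j).
have aA : a *m A = d i *: a.
  apply/rowP => j; rewrite !mxE.
  have := congr1 (@complex.Re R) (vA j); rewrite Re_sum ReMl => <-.
  by apply: eq_bigr => k _; rewrite ReMr mxE.
have bA : b *m A = d i *: b.
  apply/rowP => j; rewrite !mxE.
  have := congr1 (@complex.Im R) (vA j); rewrite Im_sum ImMl => <-.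
  by apply: eq_bigr => k _; rewrite ImMr mxE.
have [a0|a0] := eqVneq a 0; last exact: normalize a0 aA.
have [b0|b0] := eqVneq b 0; last exact: normalize b0 bA.
exfalso; have := @oner_neq0 C; rewrite -v1 big1 ?eqxx //.
move=> k _.
have Ha := congr1 (fun M : 'rV[R]_m => M 0 k) a0; have Hb := congr1 (fun M : 'rV[R]_m => M 0 k) b0.
rewrite !mxE in Ha Hb.
suff -> : P i k = 0 by rewrite mul0r.
by move: Ha Hb; case: (P i k) => x y /= -> ->.
Qed.
End Diag.

Section SSU.
Variable R : realType.

Definition qf m (h : 'M[R]_m) (x : 'rV[R]_m) :=
  4 * (x *m (h *m h) *m x^T) 0 0 - (x *m h *m x^T) 0 0 * \tr h.

Lemma dotvZ q (a b : R) (u v : 'rV[R]_q) :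
  dotv (a *: u) (b *: v) = a * b * dotv u v.
Proof. by rewrite /dotv linearZ /= -scalemxAl -scalemxAr !mxE mulrA. Qed.

Lemma mul_ebT m (M : 'rV[R]_m) b : (M *m (@ebasis R _ b)^T) 0 0 = M 0 b.
Proof. by rewrite /ebasis trmx_delta -colE mxE. Qed.

Lemma eb_mul m (h : 'M[R]_m) b : (@ebasis R _ b *m h *m (@ebasis R _ b)^T) 0 0 = h b b.
Proof. by rewrite mul_ebT /ebasis -rowE mxE. Qed.

Lemma ssu_eq m (h : 'M[R]_m) (nu : 'rV[R]_m.+1) (x : 'rV[R]_m) :
  h^T = h -> dotv nu nu = 1 ->
  \sum_(b < m) (4 * dotv (hyp_sff h nu x (@ebasis R _ b)) (hyp_sff h nu x (@ebasis R _ b))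
                  - dotv (hyp_sff h nu x x) (hyp_sff h nu (@ebasis R _ b) (@ebasis R _ b)))
  = qf h x.
Proof.
move=> sh nu1; rewrite /hyp_sff /qf.
under eq_bigr do rewrite !dotvZ nu1 !mulr1 eb_mul !mul_ebT.
rewrite sumrB -mulr_sumr -mulr_sumr /mxtrace.
suff -> : (x *m (h *m h) *m x^T) 0 0 = \sum_i (x *m h) 0 i * (x *m h) 0 i by [].
rewrite mulmxA -[x *m h *m h *m x^T]mulmxA.
have -> : h *m x^T = (x *m h)^T by rewrite trmx_mul sh.
rewrite mxE; by apply: eq_bigr => b _; congr (_ * _); rewrite mxE.
Qed.

End SSU.

Section Main.
Variable R : realType.

Lemma qf_decomp m (A : 'M[R]_m) (P : 'M[R[i]]_m) (d : 'I_m -> R) (x : 'rV[R]_m) :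
  P *m P^t* = 1%:M -> P^t* *m P = 1%:M ->
  map_mx (real_complex R) A = P^t* *m diag_mx (\row_i (d i)%:C%C) *m P ->
  qf A x = \sum_i wr P x i * (d i * (4 * d i - \tr A)) /\
  (x *m x^T) 0 0 = \sum_i wr P x i.
Proof.
move=> PP PtP E; split; last first.
  have := quad_id x (decomp_one PtP); rewrite mulmx1 => ->.
  by apply: eq_bigr => i _; rewrite mul1r.
rewrite /qf (quad_id x (decomp_sq PP E)) (quad_id x E).
rewrite mulr_sumr mulr_suml -sumrB; apply: eq_bigr => i _; ring.
Qed.

Lemma wsum_neg m (w c : 'I_m -> R) : (forall i, 0 <= w i) -> (forall i, c i < 0) ->
  \sum_i w i = 1 -> \sum_i w i * c i < 0.
Proof.
move=> w0 c0 w1; rewrite ltNge; apply/negP => H.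
have F0 : forall i, true -> 0 <= - (w i * c i).
  by move=> i _; rewrite oppr_ge0 mulr_ge0_le0 // ltW.
have S0 : \sum_i - (w i * c i) = 0.
  apply/eqP; rewrite eq_le sumr_ge0 // andbT sumrN oppr_le0 //.
have Wz : forall i, w i = 0.
  move=> i; have := psumr_eq0P F0 S0 (i:=i) isT.
  move/eqP; rewrite oppr_eq0 mulf_eq0 => /orP[/eqP //|/eqP ci].
  by have := c0 i; rewrite ci ltxx.
by move: w1; rewrite big1 // => /esym/eqP; rewrite oner_eq0.
Qed.

Lemma big_ord_map (T : Type) (idx : T) (op : Monoid.com_law idx) m (F : R -> T) (f : 'I_m -> R) :
  \big[op/idx]_(i < m) F (f i) = \big[op/idx]_(x <- map f (enum 'I_m)) F x.
Proof. by rewrite big_map big_enum. Qed.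

Lemma big_ord_nth (T : Type) (idx : T) (op : Monoid.com_law idx) m (F : R -> T) (s : seq R) :
  size s = m -> \big[op/idx]_(i < m) F (nth 0 s i) = \big[op/idx]_(x <- s) F x.
Proof. by move=> <-; rewrite (big_nth 0) big_mkord. Qed.


Lemma pc_to_neg n (A : 'M[R]_n.+1) : A^T = A -> pc_condition A ->
  forall x : 'rV[R]_n.+1, (x *m x^T) 0 0 = 1 -> qf A x < 0.
Proof.
move=> sA [lam [cpl [mono [pos lmax]]]] x x1.
have [P [d [PP PtP E]]] := sym_decomp sA.
have cpd := charpoly_decomp PtP E.
have [-> wsum] := qf_decomp x PP PtP E.
have pe : perm_eq (map d (enum 'I_n.+1)) (map lam (enum 'I_n.+1)).
  apply: prod_XsubC_eq; rewrite -!(big_ord_map _ (fun a => 'X - a%:P)).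
  by rewrite -cpd -cpl.
have T : \tr A = \sum_i lam i.
  rewrite (trace_decomp PP E) (big_ord_map _ id) (big_ord_map _ id lam).
  exact: perm_big.
have Tl : 4 * lam ord_max < \tr A.
  rewrite T (bigD1 ord_max) //=; lra.
apply: wsum_neg => //; first by move=> i; exact: wr_ge0.
  move=> i.
  have : d i \in map lam (enum 'I_n.+1) by rewrite -(perm_mem pe) map_f ?mem_enum.
  case/mapP => j _ dj.
  have h0 : lam ord0 <= lam j by apply: mono.
  have h1 : lam j <= lam ord_max by apply: mono; rewrite -ltnS ltn_ord.
  rewrite dj; nra.
by rewrite -wsum.
Qed.

Lemma eig_neg m (A : 'M[R]_m) (P : 'M[R[i]]_m) (d : 'I_m -> R) :
  P *m P^t* = 1%:M ->
  map_mx (real_complex R) A = P^t* *m diag_mx (\row_i (d i)%:C%C) *m P ->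
  (forall x : 'rV[R]_m, (x *m x^T) 0 0 = 1 -> qf A x < 0) ->
  forall i, d i * (4 * d i - \tr A) < 0.
Proof.
move=> PP E Hq i.
have [x [x1 xA]] := real_eigvec PP E i.
have := Hq x x1; rewrite /qf mulmxA xA -scalemxAl xA scalerA.
rewrite -!scalemxAl [((d i * d i) *: (_ : 'M[R]_1)) 0 0]mxE [(d i *: (_ : 'M[R]_1)) 0 0]mxE x1; nra.
Qed.

Lemma neg_to_pc n (A : 'M[R]_n.+1) : A^T = A ->
  (forall x : 'rV[R]_n.+1, (x *m x^T) 0 0 = 1 -> qf A x < 0) ->
  0 < \tr A -> pc_condition A.
Proof.
move=> sA Hq T0.
have [P [d [PP PtP E]]] := sym_decomp sA.
have cpd := charpoly_decomp PtP E.
have Hd := eig_neg PP E Hq.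
have dpos : forall i, 0 < d i /\ 4 * d i < \tr A.
  by move=> i; have := Hd i; split; nra.
pose s := sort <=%R (map d (enum 'I_n.+1)).
have ps : perm_eq s (map d (enum 'I_n.+1)) by rewrite perm_sort.
have ss : size s = n.+1 by rewrite size_sort size_map size_enum_ord.
have sorted_s : sorted <=%R s by apply: sort_sorted; exact: le_total.
have ins : forall i : 'I_n.+1, exists j, nth 0 s i = d j.
  move=> i; have : nth 0 s i \in map d (enum 'I_n.+1).
    by rewrite -(perm_mem ps) mem_nth // ss.
  by case/mapP => j _ ->; exists j.
exists (fun i : 'I_n.+1 => nth 0 s i); split; [|split; [|split]].
- rewrite cpd (big_ord_nth _ (fun a => 'X - a%:P) ss).
  rewrite (big_ord_map _ (fun a => 'X - a%:P)); apply/esym/perm_big => //.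
- move=> i j ij; apply: le_sorted_leq_nth => //; by rewrite inE ss.
- by have [j ->] := ins ord0; case: (dpos j).
- have T : \tr A = \sum_(i < n.+1) nth 0 s i.
    rewrite (trace_decomp PP E) (big_ord_nth _ id ss) (big_ord_map _ id).
    by apply/esym/perm_big.
  have [j dj] := ins ord_max; have [_ dj4] := dpos j.
  move: dj4; rewrite T (bigD1 ord_max) //= dj; lra.
Qed.
End Main.

Lemma qf_sign (R : realType) m (h : 'M[R]_m) (s : R) (x : 'rV[R]_m) :
  (s = 1 \/ s = -1) -> qf (s *: h) x = qf h x.
Proof.
case=> ->; first by rewrite scale1r.
rewrite /qf scaleN1r.
have -> : - h *m - h = h *m h by rewrite mulNmx mulmxN opprK.
rewrite mulmxN mulNmx linearN /= [(- (_ : 'M[R]_1)) 0 0]mxE; ring.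
Qed.

Lemma ssu_qf (R : realType) n (h : 'M[R]_n.+1) (nu : 'rV[R]_n.+2) :
  h^T = h -> dotv nu nu = 1 ->
  PhiSSU_at (hyp_sff h nu) <-> (forall x, (x *m x^T) 0 0 = 1 -> qf h x < 0).
Proof.
move=> sh nu1; split => H x x1.
- by have := H x x1; rewrite ssu_eq.
- by rewrite ssu_eq //; apply: H.
Qed.

Local Close Scope sesquilinear_scope.

Theorem theorem5p1 (R : realType) (n : nat) (N : Type)
  (h : N -> 'M[R]_n.+1) (nu : N -> 'rV[R]_n.+2) :
  (forall y, (h y)^T = h y) ->
  (forall y, dotv (nu y) (nu y) = 1) ->
  ((forall y, PhiSSU_at (hyp_sff (h y) (nu y))) <->
   (forall y, exists s : R, (s = 1 \/ s = -1) /\ pc_condition (s *: h y))).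
Proof.
move=> sh nu1; split => H y.
- have Hq := (ssu_qf (sh y) (nu1 y)).1 (H y).
  have [P [d [PP PtP E]]] := sym_decomp (sh y).
  have Hd := eig_neg PP E Hq.
  have symS : forall s : R, (s *: h y)^T = s *: h y.
    by move=> s; rewrite linearZ /= sh.
  have HqS : forall s : R, (s = 1 \/ s = -1) ->
      forall x : 'rV[R]_n.+1, (x *m x^T) 0 0 = 1 -> qf (s *: h y) x < 0.
    by move=> s Hs x x1; rewrite qf_sign //; apply: Hq.
  have [T0|T0|T0] := ltgtP (\tr (h y)) 0.
  + exists (-1); split; first by right.
    apply: neg_to_pc => //; first by apply: HqS; right.
    by rewrite linearZ /= mulN1r oppr_gt0.
  + exists 1; split; first by left.
    apply: neg_to_pc => //; first by apply: HqS; left.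
    by rewrite linearZ /= mul1r.
  + exfalso; have := Hd ord0; rewrite T0 subr0; nra.
- apply/(ssu_qf (sh y) (nu1 y)) => x x1.
  have [s [Hs Hpc]] := H y.
  rewrite -(qf_sign _ _ Hs); apply: pc_to_neg => //.
  by rewrite linearZ /= sh.
Qed.
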